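(* Let $\lambda\in\mathcal{X}(T)^+$ and let $\pi$ be a $T$-weight occurring in $V(\lambda)$. Then $\pi\leqslant^\lambda\lambda$, i.e. $\lambda-\pi\in\mathbb{N}[\Phi^+(\lambda)]$.
   Context: $G$ is a connected semisimple group over an algebraically closed field of characteristic zero, $T\subset B$ a maximal torus and Borel subgroup, $\Phi^+$ the positive roots, $\Delta$ the simple roots, $\mathcal{X}(T)^+$ the dominant characters, $V(\lambda)$ the simple module of highest weight $\lambda$. $\operatorname{Supp}(\lambda)=\{\alpha\in\Delta:\langle\lambda,\alpha^\vee\rangle\neq0\}$; for $\beta=\sum n_\alpha\alpha$, $\operatorname{Supp}_\Delta(\beta)=\{\alpha:n_\alpha\neq0\}$; $\Phi^+(\lambda)=\{\beta\in\Phi^+:\operatorname{Supp}_\Delta(\beta)\cap\operatorname{Supp}(\lambda)\neq\varnothing\}$; $\nu\leqslant^\lambda\mu$ iff $\mu-\nu\in\mathbb{N}[\Phi^+(\lambda)]$. *)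

(* Defs.v *)
(* Root-datum / Lie-algebra encoding of the setting:
   G connected semisimple over an algebraically closed field of char 0 is
   encoded by its Cartan matrix A (of finite type) w.r.t. the base Delta
   determined by B ⊃ T; V(lambda) is encoded through the differentiated
   action of Lie(G) in Chevalley generators e_i, f_i, h_i (i in Delta). *)
From HB Require Import structures.
From mathcomp Require Import all_boot all_order all_algebra.
Set Implicit Arguments. Unset Strict Implicit. Unset Printing Implicit Defensive.
Import Order.TTheory GRing.Theory Num.Theory.
Local Open Scope ring_scope.

Section Defs.
Variable n : nat.
Variable A : 'M[int]_n.  (* A i j = < alpha_j , alpha_i^vee > *)

Definition finite_cartan : Prop :=
  [/\ forall i, A i i = 2,
      forall i j, i != j -> A i j <= 0,
      forall i j, (A i j == 0) = (A j i == 0) &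
      exists D : 'rV[rat]_n,
        (forall i, 0 < D 0 i) /\
        let S := \matrix_(i, j) (D 0 i * (A i j)%:~R) in
        S^T = S /\ forall x : 'rV[rat]_n, x != 0 -> 0 < (x *m S *m x^T) 0 0].

(* Elements of the root lattice are written in simple-root coordinates:
   b = sum_j b_j alpha_j.  Pairing with the simple coroot alpha_i^vee. *)
Definition pair_coroot (b : 'rV[int]_n) (i : 'I_n) : int :=
  \sum_j b 0 j * A i j.

(* The corresponding element in "weight coordinates" (<_, alpha_i^vee>)_i. *)
Definition wt_of (b : 'rV[int]_n) : 'rV[int]_n := \row_i pair_coroot b i.

Definition srefl (i : 'I_n) (b : 'rV[int]_n) : 'rV[int]_n :=
  b - pair_coroot b i *: delta_mx 0 i.

Inductive is_root : 'rV[int]_n -> Prop :=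
| root_simple i : is_root (delta_mx 0 i)
| root_refl i b : is_root b -> is_root (srefl i b).

Definition is_pos_root (b : 'rV[int]_n) : Prop :=
  is_root b /\ forall j, 0 <= b 0 j.

(* Weights are given by their coordinates (<lam, alpha_i^vee>)_i. *)
Definition Supp (lam : 'rV[int]_n) (j : 'I_n) : bool := lam 0 j != 0.
Definition SuppD (b : 'rV[int]_n) (j : 'I_n) : bool := b 0 j != 0.

Definition Phi_plus_of (lam : 'rV[int]_n) (b : 'rV[int]_n) : Prop :=
  is_pos_root b /\ exists j, SuppD b j && Supp lam j.

Definition dominant (lam : 'rV[int]_n) : Prop := forall i, 0 <= lam 0 i.

Definition le_lam (lam nu mu : 'rV[int]_n) : Prop :=
  exists s : seq 'rV[int]_n,
    (forall b, b \in s -> Phi_plus_of lam b) /\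
    mu - nu = wt_of (\sum_(b <- s) b).

Variable F : fieldType.
Variable d : nat.
Definition lie (X Y : 'M[F]_d) : 'M[F]_d := X *m Y - Y *m X.

(* Chevalley-Serre relations: (E,Fm,H) is a representation of Lie(G)
   on F^d (column vectors, action by left multiplication). *)
Definition is_rep (E Fm H : 'I_n -> 'M[F]_d) : Prop :=
  [/\ forall i j, lie (H i) (H j) = 0,
      forall i j, lie (H i) (E j) = (A i j)%:~R *: E j,
      forall i j, lie (H i) (Fm j) = - ((A i j)%:~R *: Fm j),
      forall i j, lie (E i) (Fm j) = if i == j then H i else 0 &
      forall i j, i != j ->
        iter `|1 - A i j|%N (lie (E i)) (E j) = 0 /\
        iter `|1 - A i j|%N (lie (Fm i)) (Fm j) = 0].

(* a subspace W (the row space of U, transposed) is stable under X *)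
Definition stable_col (U X : 'M[F]_d) : bool := (U *m X^T <= U)%MS.

Definition irreducible_rep (E Fm H : 'I_n -> 'M[F]_d) : Prop :=
  forall U : 'M[F]_d,
    (forall i, [&& stable_col U (E i), stable_col U (Fm i) & stable_col U (H i)]) ->
    U = 0 \/ row_full U.

Definition highest_weight (E H : 'I_n -> 'M[F]_d) (lam : 'rV[int]_n) : Prop :=
  exists v : 'cV[F]_d, v != 0 /\
    forall i, E i *m v = 0 /\ H i *m v = (lam 0 i)%:~R *: v.

Definition is_weight (H : 'I_n -> 'M[F]_d) (pi : 'rV[int]_n) : Prop :=
  exists w : 'cV[F]_d, w != 0 /\ forall i, H i *m w = (pi 0 i)%:~R *: w.

End Defs.

(* Main.v *)
Require Import Defs.
From HB Require Import structures.
From mathcomp Require Import all_boot all_order all_algebra.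
From mathcomp Require Import ring.
Set Implicit Arguments. Unset Strict Implicit. Unset Printing Implicit Defensive.
Import Order.TTheory GRing.Theory Num.Theory.
Local Open Scope ring_scope.
Definition islin (F : fieldType) (V : lmodType F) (g : V -> V) :=
  forall (a : F) (x y : V), g (a *: x + y) = a *: g x + g y.

Section Kill.
Variable F : fieldType.
Variable V : lmodType F.
Lemma islin0 (g : V -> V) : islin g -> g 0 = 0.
Proof. by move=> lg; have := lg (-1) 0 0; rewrite scaler0 addr0 scaleN1r addNr. Qed.
Lemma islinZ (g : V -> V) : islin g -> forall a x, g (a *: x) = a *: g x.
Proof. by move=> lg a x; have := lg a x 0; rewrite addr0 (islin0 lg) addr0. Qed.
Lemma islinD (g : V -> V) : islin g -> forall x y, g (x + y) = g x + g y.
Proof. by move=> lg x y; have := lg 1 x y; rewrite !scale1r. Qed.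
Lemma islin_sum (g : V -> V) (I : Type) (s : seq I) (G : I -> V) : islin g ->
  g (\sum_(i <- s) G i) = \sum_(i <- s) g (G i).
Proof.
move=> lg; elim: s => [|i s IH]; first by rewrite !big_nil (islin0 lg).
by rewrite !big_cons (islinD lg) IH.
Qed.

Lemma kill (n : nat) (T : 'I_n -> V -> V) (lT : forall k, islin (T k))
  (s : seq (V * 'rV[F]_n)) (mu : 'rV[F]_n) (Y : V) :
  (forall p, p \in s -> forall k, T k p.1 = p.2 0 k *: p.1) ->
  Y = \sum_(p <- s) p.1 ->
  (forall k, T k Y = mu 0 k *: Y) ->
  (forall p, p \in s -> p.2 != mu) -> Y = 0.
Proof.
move: {2}(size s) (erefl (size s)) => m; elim: m s Y => [|m IH] [|p s] Y //= hsz hs hY hmu hne;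
  try by rewrite hY big_nil.
case: hsz => hsz.
have [k hk] : exists k, p.2 0 k != mu 0 k.
  case: (boolP [exists k, p.2 0 k != mu 0 k]) => [/existsP //|].
  rewrite negb_exists => /forallP hall; exfalso.
  move: (hne p (mem_head _ _)) => /eqP; apply; apply/rowP => j.
  by move: (hall j); rewrite negbK => /eqP.
set c := mu 0 k - p.2 0 k.
have hc : c != 0 by rewrite subr_eq0 eq_sym.
have eY : c *: Y = \sum_(q <- s) ((q.2 0 k - p.2 0 k) *: q.1).
  have -> : c *: Y = T k Y - p.2 0 k *: Y by rewrite hmu /c scalerBl.
  rewrite {1}hY big_cons (islinD (lT k)) (islin_sum _ _ (lT k)) hY big_cons scalerDr.
  rewrite (hs p (mem_head _ _)).
  rewrite opprD addrACA subrr add0r scaler_sumr -sumrB.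
  apply: eq_big_seq => q hq; rewrite (hs q) ?in_cons ?hq ?orbT // scalerBl //.
have := IH [seq ((q.2 0 k - p.2 0 k) *: q.1, q.2) | q : V * 'rV[F]_n <- s].
rewrite size_map big_map /= -eY => /(_ (c *: Y) hsz _ erefl) h.
suff : c *: Y = 0 by move/eqP; rewrite scaler_eq0 (negbTE hc) => /eqP.
apply: h.
- move=> q /mapP [r hr ->] j /=; rewrite (islinZ (lT j)) (hs r) ?in_cons ?hr ?orbT //.
  by rewrite !scalerA mulrC.
- by move=> j; rewrite (islinZ (lT j)) hmu !scalerA mulrC.
- by move=> q /mapP [r hr ->] /=; apply: hne; rewrite in_cons hr orbT.
Qed.
End Kill.

Section Generic.
Variable F : fieldType.
Hypothesis hc : [pchar F] =i pred0.

Lemma intrF_eq0 (z : int) : (z%:~R == 0 :> F) = (z == 0).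
Proof.
have hn := (pcharf0P F).1 hc.
case: z => m /=; first by rewrite hn.
by rewrite NegzE mulrNz oppr_eq0 hn.
Qed.

Lemma intrF_inj (a b : int) : (a%:~R : F) = b%:~R -> a = b.
Proof.
move=> e; apply/eqP; rewrite -subr_eq0 -intrF_eq0 intrB e subrr //.
Qed.

Lemma eigen_count N (G : 'M[F]_N) (x : nat -> 'rV[F]_N) (a dd : int) :
  dd != 0 -> (forall k, x k *m G = (a + dd * k%:Z)%:~R *: x k) ->
  exists k, x k = 0.
Proof.
move=> hd hx.
case: (boolP [exists k : 'I_N.+1, x k == 0]) => [/existsP [k /eqP]|]; first by eauto.
rewrite negb_exists => /forallP hnz; exfalso.
set rs := [seq ((a + dd * k%:Z)%:~R : F) | k <- iota 0 N.+1].
have := @max_poly_roots _ (char_poly G) rs.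
rewrite size_char_poly size_map size_iota ltnn => h; suff: false by []; apply: h.
- by rewrite -lead_coef_eq0 (monicP (char_poly_monic G)) oner_eq0.
- apply/allP => z /mapP [k hk ->]; rewrite -eigenvalue_root_char.
  apply/eigenvalueP; exists (x k) => //.
  have hk' : (k < N.+1)%N by move: hk; rewrite mem_iota add0n.
  exact: (hnz (Ordinal hk')).
- rewrite map_inj_uniq ?iota_uniq // => k l /intrF_inj /addrI.
  rewrite ![dd * _]mulrC => /(mulIf hd) [] //.
Qed.

End Generic.

Section SL2.
Variable F : fieldType.
Hypothesis hc : [pchar F] =i pred0.
Variable V : lmodType F.
Variables e f h : V -> V.
Hypotheses (le : islin e) (lf : islin f) (lh : islin h).
Hypothesis hef : forall x, e (f x) - f (e x) = h x.
Hypothesis hhe : forall x, h (e x) - e (h x) = 2%:R *: e x.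
Hypothesis hhf : forall x, h (f x) - f (h x) = - (2%:R *: f x).

Lemma hf_iter c y : h y = c *: y -> forall k, h (iter k f y) = (c - (2 * k)%:R) *: iter k f y.
Proof.
move=> hy; elim=> [|k IH] /=; first by rewrite subr0.
have := hhf (iter k f y); rewrite IH (islinZ lf) => /eqP; rewrite subr_eq => /eqP ->.
rewrite -scaleNr -scalerDl; congr (_ *: _).
rewrite mulnS natrD; ring.
Qed.


Lemma ef_iter c y : h y = c *: y -> forall k,
  e (iter k.+1 f y) = iter k.+1 f (e y) + ((k.+1)%:R * (c - k%:R)) *: iter k f y.
Proof.
move=> hy; elim=> [|k IH].
  by have := hef y; rewrite hy /= => /eqP; rewrite subr_eq => /eqP ->; rewrite mul1r subr0 addrC.
have := hef (iter k.+1 f y); rewrite (hf_iter hy) => /eqP; rewrite subr_eq => /eqP.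
change (iter k.+2 f y) with (f (iter k.+1 f y)) => ->; rewrite IH.
rewrite (islinD lf) (islinZ lf) addrCA.
change (f (iter k f y)) with (iter k.+1 f y); rewrite -scalerDl.
change (f (iter k.+1 f (e y))) with (iter k.+2 f (e y)); congr (_ + _ *: _).
rewrite natrM !mulrSr; ring.
Qed.

Lemma nat_neq0F (k : nat) : (k != 0)%N -> (k%:R : F) != 0.
Proof. by rewrite ((pcharf0P F).1 hc). Qed.

Lemma sl2_main p : forall x (m : nat), iter p e x = 0 -> h x = m%:R *: x ->
  (0 < m)%N -> iter m f x = 0 -> x = 0.
Proof.
elim: p => [|p IH] x m /=; first by move=> ->.
move=> hp hx hm hfm.
case: (eqVneq (e x) 0) => hex.
  have key : forall k, (k < m)%N -> iter k.+1 f x = 0 -> iter k f x = 0.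
    move=> k hk h0; have := ef_iter hx k; rewrite h0 hex.
    have -> : iter k.+1 f 0 = 0 by elim: k.+1 => //= j ->; exact: islin0.
    rewrite (islin0 le) add0r => /esym/eqP; rewrite scaler_eq0 => /orP [|/eqP //].
    rewrite -natrB ?(ltnW hk) // -natrM => /eqP h1; exfalso; move: h1; apply/eqP.
    by apply: nat_neq0F; rewrite muln_eq0 negb_or /= subn_eq0 -ltnNge.
  suff : forall j, (j <= m)%N -> iter (m - j) f x = 0 by move/(_ m (leqnn m)); rewrite subnn.
  elim=> [|j IHj] hj; first by rewrite subn0.
  apply: key; first by rewrite ltn_subLR // addSn ltnS leq_addl.
  by rewrite -subSn // subSS IHj // ltnW.
have hex' : h (e x) = (m + 2)%:R *: e x.
  by have := hhe x; rewrite hx (islinZ le) => /eqP; rewrite subr_eq => /eqP ->; rewrite -scalerDl natrD addrC.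
have := IH (e x) (m + 2)%N; rewrite -iterSr; move/(_ hp hex'); rewrite addn_gt0 hm => /(_ isT).
case: m hm hx hfm hex' => // m _ hx hfm hex'.
have := ef_iter hx m; rewrite hfm (islin0 le) => h1.
have h2 : iter m.+1 f (e x) = - ((m.+1%:R * (m.+1%:R - m%:R)) *: iter m f x).
  by apply/eqP; rewrite -addr_eq0 -h1.
move=> IH'; exfalso; move/eqP: hex; apply; apply: IH'.
rewrite addn2.
change (f (f (iter m.+1 f (e x))) = 0); rewrite h2 -scaleNr (islinZ lf).
change (f (iter m f x)) with (iter m.+1 f x); rewrite hfm scaler0 (islin0 lf).
by [].
Qed.

End SL2.

Lemma zmod6 (M : zmodType) (p1 p2 p3 p4 p5 p6 : M) :
  p1 - p2 - (p3 - p4) = p1 - p5 - (p6 - p4) + (p5 - p3 - (p2 - p6)).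
Proof.
rewrite !opprB !addrA.
rewrite (addrAC _ (-p3) p6) (addrAC _ p5 p6) addrNK (addrAC _ p4 p5) addrNK.
by rewrite (addrAC p1 (-p2) p4) addrAC.
Qed.

Section Lie.
Variable F : fieldType.
Variable d : nat.
Implicit Types X Y Z : 'M[F]_d.

Lemma jacobi X Y Z : lie X (lie Y Z) = lie (lie X Y) Z + lie Y (lie X Z).
Proof.
rewrite /lie !mulmxBl !mulmxBr !mulmxA.
exact: zmod6.
Qed.
Lemma lieC X Y : lie X Y = - lie Y X.
Proof. by rewrite /lie opprB. Qed.
End Lie.

Section Cartan.
Variable n : nat.
Variable A : 'M[int]_n.

Lemma pairB' b c k : pair_coroot A (b - c) k = pair_coroot A b k - pair_coroot A c k.
Proof. by rewrite /pair_coroot -sumrB; apply: eq_bigr => j _; rewrite !mxE mulrBl. Qed.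

Lemma qform_eq (D : 'rV[rat]_n) (x : 'rV[int]_n) :
  let S := \matrix_(i, j) (D 0 i * (A i j)%:~R) in
  let xr := map_mx (fun z : int => z%:~R : rat) x in
  (xr *m S *m xr^T) 0 0 = \sum_i (x 0 i)%:~R * D 0 i * (pair_coroot A x i)%:~R.
Proof.
move=> S xr; rewrite mxE.
under eq_bigr do rewrite !mxE big_distrl /=.
rewrite exchange_big /=; apply: eq_bigr => i _.
rewrite /pair_coroot (rmorph_sum (intr : {rmorphism int -> rat})) mulr_sumr.
apply: eq_bigr => j _; rewrite !mxE rmorphM /=; ring.
Qed.

Hypothesis hA : finite_cartan A.

Lemma pair_inj0 (x : 'rV[int]_n) : (forall k, pair_coroot A x k = 0) -> x = 0.
Proof.
move=> hx; case: hA => _ _ _ [D [hD [_ hpos]]].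
set xr := map_mx (fun z : int => z%:~R : rat) x.
case: (eqVneq xr 0) => hxr.
  apply/rowP => j; move/rowP: hxr => /(_ j); rewrite !mxE => /eqP.
  by rewrite intr_eq0 => /eqP.
have := hpos xr hxr; rewrite qform_eq big1 ?ltxx // => i _.
by rewrite hx mulr0.
Qed.

Lemma pair_inj (x y : 'rV[int]_n) : (forall k, pair_coroot A x k = pair_coroot A y k) -> x = y.
Proof.
move=> h; apply/eqP; rewrite -subr_eq0; apply/eqP; apply: pair_inj0 => k.
by rewrite pairB' h subrr.
Qed.

Lemma pair_pos (x : 'rV[int]_n) : (forall j, 0 <= x 0 j) -> x != 0 ->
  exists i, 0 < pair_coroot A x i.
Proof.
move=> hx0 hx; case: hA => _ _ _ [D [hD [_ hpos]]].
set xr := map_mx (fun z : int => z%:~R : rat) x.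
have hxr : xr != 0.
  apply: contra hx => /eqP/rowP h; apply/eqP/rowP => j; move: (h j); rewrite !mxE => /eqP.
  by rewrite intr_eq0 => /eqP.
case: (boolP [exists i, 0 < pair_coroot A x i]) => [/existsP //|].
rewrite negb_exists => /forallP hall; exfalso.
have := hpos xr hxr; rewrite qform_eq; apply/negP; rewrite -leNgt.
apply: sumr_le0 => i _; rewrite -mulrA.
have := hx0 i; rewrite le_eqVlt => /orP [/eqP <-|hxi]; first by rewrite mul0r.
rewrite pmulr_rle0 ?ltr0z // pmulr_rle0 ?hD //.
by rewrite lerz0 leNgt; exact: hall.
Qed.
End Cartan.

Section Main.
Variable F : fieldType.
Hypothesis hc : [pchar F] =i pred0.
Variable n : nat.
Variable A : 'M[int]_n.
Variable d : nat.
Variables E Fm H : 'I_n -> 'M[F]_d.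
Hypothesis hrep : is_rep A E Fm H.
Hypothesis hA : finite_cartan A.

Lemma rHH i j : lie (H i) (H j) = 0. Proof. by case: hrep. Qed.
Lemma rHE i j : lie (H i) (E j) = (A i j)%:~R *: E j. Proof. by case: hrep. Qed.
Lemma rHF i j : lie (H i) (Fm j) = - ((A i j)%:~R *: Fm j). Proof. by case: hrep. Qed.
Lemma rEF i j : lie (E i) (Fm j) = if i == j then H i else 0. Proof. by case: hrep. Qed.

Lemma lie_islin (X : 'M[F]_d) : islin (lie X).
Proof. by move=> a Y Z; rewrite /lie mulmxDr mulmxDl -scalemxAr -scalemxAl scalerBr opprD addrACA. Qed.
Lemma lieZl (a : F) (X Y : 'M[F]_d) : lie (a *: X) Y = a *: lie X Y.
Proof. by rewrite /lie -scalemxAl -scalemxAr scalerBr. Qed.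
Lemma lieDl (X Y Z : 'M[F]_d) : lie (X + Y) Z = lie X Z + lie Y Z.
Proof. by rewrite /lie mulmxDl mulmxDr opprD addrACA. Qed.
Lemma lie0r (X : 'M[F]_d) : lie X 0 = 0. Proof. by rewrite /lie mulmx0 mul0mx subrr. Qed.
Lemma lie0l (X : 'M[F]_d) : lie 0 X = 0. Proof. by rewrite /lie mulmx0 mul0mx subrr. Qed.
Lemma lieZr (a : F) (X Y : 'M[F]_d) : lie X (a *: Y) = a *: lie X Y.
Proof. exact: (islinZ (lie_islin X)). Qed.
Lemma lieDr (X Y Z : 'M[F]_d) : lie X (Y + Z) = lie X Y + lie X Z.
Proof. exact: (islinD (lie_islin X)). Qed.
Lemma lieNr (X Y : 'M[F]_d) : lie X (- Y) = - lie X Y.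
Proof. by rewrite -scaleN1r lieZr scaleN1r. Qed.
Lemma lieBr (X Y Z : 'M[F]_d) : lie X (Y - Z) = lie X Y - lie X Z.
Proof. by rewrite lieDr lieNr. Qed.

Lemma pairD b c k : pair_coroot A (b + c) k = pair_coroot A b k + pair_coroot A c k.
Proof. by rewrite /pair_coroot -big_split; apply: eq_bigr => j _; rewrite mxE mulrDl. Qed.
Lemma pairN b k : pair_coroot A (- b) k = - pair_coroot A b k.
Proof. by rewrite /pair_coroot -sumrN; apply: eq_bigr => j _; rewrite mxE mulNr. Qed.
Lemma pairB b c k : pair_coroot A (b - c) k = pair_coroot A b k - pair_coroot A c k.
Proof. by rewrite pairD pairN. Qed.
Lemma pairZ (z : int) b k : pair_coroot A (z *: b) k = z * pair_coroot A b k.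
Proof. by rewrite /pair_coroot mulr_sumr; apply: eq_bigr => j _; rewrite mxE mulrA. Qed.
Lemma pair_delta j k : pair_coroot A (delta_mx 0 j) k = A k j.
Proof.
rewrite /pair_coroot (bigD1 j) //= mxE !eqxx mul1r big1 ?addr0 // => i hij.
by rewrite mxE (negbTE hij) andbF mul0r.
Qed.
Lemma pair0 k : pair_coroot A 0 k = 0.
Proof. by rewrite /pair_coroot big1 // => j _; rewrite mxE mul0r. Qed.

Definition wvec (b : 'rV[int]_n) : 'rV[F]_n := \row_k (- pair_coroot A b k)%:~R.
Definition weightM (Y : 'M[F]_d) (nu : 'rV[F]_n) := forall k, lie (H k) Y = nu 0 k *: Y.

Inductive lword : 'M[F]_d -> 'rV[int]_n -> Prop :=
| lw_base i : lword (Fm i) (delta_mx 0 i)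
| lw_br j X c : lword X c -> lword (lie (Fm j) X) (c + delta_mx 0 j).

Lemma weightF j Y b : weightM Y (wvec b) -> weightM (lie (Fm j) Y) (wvec (b + delta_mx 0 j)).
Proof.
move=> hY k; rewrite jacobi rHF hY lieZr -scaleNr lieZl -scalerDl !mxE pairD pair_delta.
by rewrite -intrN -intrD opprD addrC.
Qed.

Lemma weightE j Y b : weightM Y (wvec b) -> weightM (lie (E j) Y) (wvec (b - delta_mx 0 j)).
Proof.
move=> hY k; rewrite jacobi rHE hY lieZr lieZl -scalerDl !mxE pairB pair_delta.
by rewrite -intrD opprB addrC.
Qed.

Lemma lword_wt X c : lword X c -> weightM X (wvec c).
Proof.
elim=> [i|j Y b _ IH]; last exact: weightF.
by move=> k; rewrite rHF mxE pair_delta intrN scaleNr.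
Qed.


Inductive nm : 'M[F]_d -> Prop :=
| nm0 : nm 0
| nmW W c (a : F) Y : lword W c -> nm Y -> nm (a *: W + Y).

Lemma nm_word W c : lword W c -> nm W.
Proof. by move=> hw; rewrite -[W]addr0 -[W]scale1r; apply: nmW hw nm0. Qed.

Lemma nmD Y Z : nm Y -> nm Z -> nm (Y + Z).
Proof.
move=> hY hZ; elim: hY => [|W c a Y' hw _ IH]; first by rewrite add0r.
by rewrite -addrA; apply: nmW hw IH.
Qed.

Lemma nmZ b Y : nm Y -> nm (b *: Y).
Proof.
elim=> [|W c a Y' hw _ IH]; first by rewrite scaler0; exact: nm0.
by rewrite scalerDr scalerA; apply: nmW hw IH.
Qed.

Lemma nm_lin a Y Z : nm Y -> nm Z -> nm (a *: Y + Z).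
Proof. by move=> hY hZ; apply: nmD => //; apply: nmZ. Qed.

Lemma nm_mapP (P : 'M[F]_d -> Prop) (g : 'M[F]_d -> 'M[F]_d) : islin g -> P 0 ->
  (forall a x y, P x -> P y -> P (a *: x + y)) ->
  (forall W c, lword W c -> P (g W)) -> forall Y, nm Y -> P (g Y).
Proof.
move=> lg P0 Pl Pw Y; elim=> [|W c a Y' hw _ IH]; first by rewrite (islin0 lg).
by rewrite lg; apply: Pl => //; apply: Pw hw.
Qed.

Lemma nm_lieF j Y : nm Y -> nm (lie (Fm j) Y).
Proof.
apply: nm_mapP; [exact: lie_islin| exact: nm0| exact: nm_lin|].
by move=> W c hw; apply: nm_word; apply: lw_br hw.
Qed.

Lemma nm_lieH k Y : nm Y -> nm (lie (H k) Y).
Proof.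
apply: nm_mapP; [exact: lie_islin| exact: nm0| exact: nm_lin|].
by move=> W c hw; rewrite (lword_wt hw); apply: nmZ; apply: nm_word hw.
Qed.

Definition nmh i (Y : 'M[F]_d) := exists Z (a : F), nm Z /\ Y = Z + a *: H i.

Lemma nmh_lin i a Y Z : nmh i Y -> nmh i Z -> nmh i (a *: Y + Z).
Proof.
move=> [Y1 [b [h1 ->]]] [Z1 [b' [h2 ->]]]; exists (a *: Y1 + Z1), (a * b + b'); split.
  exact: nm_lin.
by rewrite scalerDr scalerDl scalerA addrACA.
Qed.

Lemma lieFH j i : lie (Fm j) (H i) = (A i j)%:~R *: Fm j.
Proof. by rewrite lieC rHF opprK. Qed.

Lemma nm_lieE i Y : nm Y -> nmh i (lie (E i) Y).
Proof.
apply: nm_mapP; [exact: lie_islin| |exact: nmh_lin|].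
  by exists 0, 0; rewrite scale0r addr0; split => //; exact: nm0.
move=> W c; elim=> [j|j X b hX [Z [a [hZ eZ]]]].
  rewrite rEF; case: eqP => _; last by exists 0, 0; rewrite scale0r addr0; split => //; exact: nm0.
  by exists 0, 1; rewrite scale1r add0r; split => //; exact: nm0.
rewrite jacobi rEF eZ lieDr lieZr lieFH.
exists ((if i == j then lie (H i) X else lie 0 X) + (lie (Fm j) Z + a *: ((A i j)%:~R *: Fm j))), 0.
rewrite scale0r addr0; split; last by case: eqP.
apply: nmD; first by case: eqP => _; [apply: nm_lieH; apply: nm_word hX| rewrite lie0l; exact: nm0].
apply: nmD; first exact: nm_lieF.
by apply: nmZ; apply: nmZ; apply: nm_word (lw_base j).
Qed.

Lemma nm_seq Y : nm Y -> exists s : seq ('M[F]_d * 'rV[int]_n),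
  (forall p, p \in s -> exists a W, lword W p.2 /\ p.1 = a *: W) /\ Y = \sum_(p <- s) p.1.
Proof.
elim=> [|W c a Y' hw _ [s [hs ->]]]; first by exists [::]; rewrite big_nil.
exists ((a *: W, c) :: s); rewrite big_cons; split => // p; rewrite in_cons => /orP [/eqP -> |/hs //].
by exists a, W.
Qed.


Lemma wvec_inj b c : wvec b = wvec c -> b = c.
Proof.
move=> /rowP h; apply: (pair_inj hA) => k; move: (h k); rewrite !mxE => /(intrF_inj hc).
by move/eqP; rewrite eqr_opp => /eqP.
Qed.

Lemma sum_delta i : \sum_j (delta_mx 0 i : 'rV[int]_n) 0 j = 1.
Proof.
rewrite (bigD1 i) //= mxE !eqxx big1 ?addr0 // => j hj.
by rewrite mxE (negbTE hj) andbF.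
Qed.

Lemma lword_pos W c : lword W c -> (forall j, 0 <= c 0 j) /\ 0 < \sum_j c 0 j.
Proof.
elim=> [i|j X b _ [h1 h2]]; first by rewrite sum_delta; split => // j; rewrite mxE; case: (_ && _).
split; first by move=> k; rewrite mxE addr_ge0 // mxE; case: (_ && _).
rewrite (eq_bigr (fun k => b 0 k + (delta_mx 0 j : 'rV[int]_n) 0 k)) ?big_split /= ?sum_delta.
  by rewrite ltr_wpDr.
by move=> k _; rewrite mxE.
Qed.

Lemma lword_delta W i : lword W (delta_mx 0 i) -> W = Fm i.
Proof.
move eqc : (delta_mx 0 i) => c hw; case: hw eqc => [j|j X b hX] e.
  move/rowP: e => /(_ j); rewrite !mxE !eqxx /=; case: eqP => [-> //|_] /eqP.
  by [].
exfalso; have := lword_pos hX => [[_ h]].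
have := sum_delta i; rewrite e (eq_bigr (fun k => b 0 k + (delta_mx 0 j : 'rV[int]_n) 0 k)).
  rewrite big_split /= sum_delta => /eqP; rewrite -{2}[1]add0r => /eqP/addIr hb.
  by rewrite hb ltxx in h.
by move=> k _; rewrite mxE.
Qed.

Lemma lieXX (X : 'M[F]_d) : lie X X = 0. Proof. by rewrite /lie subrr. Qed.

Lemma lword_mult W c : lword W c -> forall i (k : int), c = k *: delta_mx 0 i -> 2 <= k -> W = 0.
Proof.
elim=> [j|j X b hX IH] i k e hk.
  move/rowP: e => /(_ j); rewrite !mxE !eqxx /=; case: eqP => [_|_].
    by rewrite mulr1 => ek; rewrite -ek in hk.
  by rewrite mulr0 => /eqP; rewrite oner_eq0.
have [hb0 _] := lword_pos hX.
case: (eqVneq j i) => [eji|nji]; last first.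
  move/rowP: e => /(_ j); rewrite !mxE !eqxx /= (negbTE nji) mulr0 => /eqP.
  by rewrite paddr_eq0 ?hb0 // oner_eq0 andbF.
subst j.
have eb : b = (k - 1) *: delta_mx 0 i by rewrite scalerBl scale1r -e addrK.
case: (ltP 2 k) => hk2.
  by rewrite (IH i (k - 1) eb) ?lie0r // lerBrDr.
have k2 : k = 2 by apply/eqP; rewrite eq_le hk2 hk.
rewrite k2 in eb; have : b = delta_mx 0 i by rewrite eb (_ : 2 - 1 = 1) ?scale1r.
by move=> eb'; rewrite eb' in hX; rewrite (lword_delta hX) lieXX.
Qed.

Lemma nm_witness b Y : nm Y -> Y != 0 -> weightM Y (wvec b) -> exists W, lword W b /\ W != 0.
Proof.
move=> /nm_seq [s [hs eY]] hY0 hwY.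
set s' := [seq (p.1, wvec p.2) | p <- s & p.1 != 0].
case: (boolP (has (fun p => (p.1 != 0) && (wvec p.2 == wvec b)) s)).
  move/hasP => [p hp /andP [hp0 /eqP hw]]; have [a [W [hW e1]]] := hs p hp.
  rewrite (wvec_inj hw) in hW; exists W; split => //.
  by apply: contra hp0; rewrite e1 => /eqP ->; rewrite scaler0.
move/hasPn => hn; exfalso; move/eqP: hY0; apply.
apply: (@kill _ _ n (fun k => lie (H k)) (fun k => lie_islin (H k)) s' (wvec b)) => //.
- move=> q /mapP [p]; rewrite mem_filter => /andP [_ hp] -> k /=.
  have [a [W [hW ->]]] := hs p hp; by rewrite lieZr (lword_wt hW) scalerA mulrC -scalerA.
- rewrite eY big_map big_filter_cond /= [in RHS]big_mkcond /=; apply: eq_bigr => p _.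
  by rewrite andbT; case: eqP => [->|].
- move=> q /mapP [p]; rewrite mem_filter => /andP [hp0 hp] -> /=.
  by have := hn p hp; rewrite hp0.
Qed.


Lemma Aii i : A i i = 2. Proof. by case: hA. Qed.

Lemma weight_iterF i Y b : weightM Y (wvec b) -> forall k,
  weightM (iter k (lie (Fm i)) Y) (wvec (b + k%:Z *: delta_mx 0 i)).
Proof.
move=> hY; elim=> [|k IH] /=; first by rewrite scale0r addr0.
by rewrite -[k.+1]addn1 PoszD scalerDl scale1r addrA; apply: weightF.
Qed.

Lemma weight_iterE i Y b : weightM Y (wvec b) -> forall k,
  weightM (iter k (lie (E i)) Y) (wvec (b - k%:Z *: delta_mx 0 i)).
Proof.
move=> hY; elim=> [|k IH] /=; first by rewrite scale0r subr0.
by rewrite -[k.+1]addn1 PoszD scalerDl scale1r opprD addrA; apply: weightE.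
Qed.

Lemma mxvec_lie (X Z : 'M[F]_d) :
  mxvec Z *m (lin_mx (mulmx X) - lin_mx (mulmxr X)) = mxvec (lie X Z).
Proof. by rewrite mulmxBr !mul_vec_lin /lie linearB. Qed.

Lemma ad_nilp i Y b : weightM Y (wvec b) -> exists p, iter p (lie (Fm i)) Y = 0.
Proof.
move=> hY.
have := @eigen_count F hc (d * d) (lin_mx (mulmx (H i)) - lin_mx (mulmxr (H i)))
  (fun k => mxvec (iter k (lie (Fm i)) Y)) (- pair_coroot A b i) (-2).
case=> // [k|k ek]; last by exists k; apply/eqP; rewrite -mxvec_eq0 ek.
rewrite mxvec_lie (weight_iterF i hY k i) linearZ /= mxE pairD pairZ pair_delta Aii.
by rewrite opprD mulrC mulNr.
Qed.

Lemma lieNl (X Y : 'M[F]_d) : lie (- X) Y = - lie X Y.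
Proof. by rewrite -scaleN1r lieZl scaleN1r. Qed.

Lemma sl2_ad i Y (m : nat) : Y != 0 -> lie (H i) Y = - (m%:R *: Y) -> (0 < m)%N ->
  (exists p, iter p (lie (Fm i)) Y = 0) -> iter m (lie (E i)) Y != 0.
Proof.
move=> hY0 hY hm [p hp]; apply/eqP => h0; move/eqP: hY0; apply.
apply: (@sl2_main F hc _ (lie (Fm i)) (lie (E i)) (fun X => - lie (H i) X) (lie_islin _)
   (lie_islin _) _ _ _ p Y m) => //.
- by move=> X; rewrite jacobi addrK (lieC (Fm i) (E i)) rEF eqxx lieNl.
- move=> X; rewrite jacobi lieNr opprK opprD addrNK rHF lieNl opprK lieZl Aii //.
- move=> X; rewrite jacobi lieNr opprK opprD addrNK rHE lieZl Aii //.
- by rewrite hY opprK.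
Qed.


Lemma wvec0 : wvec 0 = 0.
Proof. by apply/rowP => k; rewrite !mxE pair0 oppr0. Qed.

Lemma nmE i Y g : nm Y -> weightM Y (wvec g) -> g - delta_mx 0 i != 0 -> nm (lie (E i) Y).
Proof.
move=> hY hw hg; have [Z [a [hZ eZ]]] := nm_lieE i hY.
have hw' := weightE i hw.
have [k hk] : exists k, wvec (g - delta_mx 0 i) 0 k != 0.
  case: (boolP [exists k, wvec (g - delta_mx 0 i) 0 k != 0]) => [/existsP //|].
  rewrite negb_exists => /forallP hall; exfalso; move/negP: hg; apply; apply/eqP.
  apply: wvec_inj; rewrite wvec0; apply/rowP => k; move: (hall k); rewrite negbK => /eqP ->.
  by rewrite mxE.
have e1 := hw' k; rewrite eZ lieDr lieZr rHH scaler0 addr0 in e1.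
have -> : lie (E i) Y = (wvec (g - delta_mx 0 i) 0 k)^-1 *: lie (H k) Z.
  by rewrite e1 scalerA mulVf // scale1r.
by apply: nmZ; apply: nm_lieH.
Qed.

Lemma sreflK i b : srefl A i (srefl A i b) = b.
Proof.
rewrite /srefl pairB pairZ pair_delta Aii.
rewrite -addrA -opprD -scalerDl (_ : pair_coroot A b i + (pair_coroot A b i - pair_coroot A b i * 2) = 0).
  by rewrite scale0r subr0.
ring.
Qed.

Lemma sum_row_sub (b c : 'rV[int]_n) : \sum_j (b - c) 0 j = \sum_j b 0 j - \sum_j c 0 j.
Proof. by rewrite -sumrB; apply: eq_bigr => j _; rewrite !mxE. Qed.

Lemma sum_row_scale (z : int) (c : 'rV[int]_n) : \sum_j (z *: c) 0 j = z * \sum_j c 0 j.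
Proof. by rewrite mulr_sumr; apply: eq_bigr => j _; rewrite mxE. Qed.

Lemma root_of_nm (N : nat) : forall b : 'rV[int]_n, \sum_j b 0 j <= N%:Z ->
  forall Y, nm Y -> Y != 0 -> weightM Y (wvec b) -> is_root A b.
Proof.
elim: N => [|N IH] b hN Y hY hY0 hw; have [W [hW hW0]] := nm_witness hY hY0 hw;
  have [hb0 hbs] := lword_pos hW.
  by move: (lt_le_trans hbs hN); rewrite ltxx.
have hbn0 : b != 0 by apply: contraTneq hbs => ->; rewrite big1 ?ltxx // => j _; rewrite mxE.
have [i hi] := pair_pos hA hb0 hbn0.
case: (boolP [exists j, (j != i) && (b 0 j != 0)]); last first.
  rewrite negb_exists => /forallP hall.
  have eb : b = b 0 i *: delta_mx 0 i.
    apply/rowP => j; rewrite !mxE eqxx /=; case: eqP => [-> |/eqP nji]; first by rewrite mulr1.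
    by move: (hall j); rewrite nji /= negbK mulr0 => /eqP.
  have hbi : 0 < b 0 i by rewrite {1}eb sum_row_scale sum_delta mulr1 in hbs.
  case: (ltP 1 (b 0 i)) => hb1.
    by exfalso; move/eqP: hW0; apply; apply: (lword_mult hW eb).
  have : b 0 i = 1 by apply/eqP; rewrite eq_le hb1 /=.
  by move=> e1; rewrite eb e1 scale1r; apply: root_simple.
move/existsP => [j /andP [nji hbj]].
case epm : (pair_coroot A b i) hi => [m|//] hm; rewrite ltz_nat in hm.
have hHY : lie (H i) Y = - (m%:R *: Y).
  by rewrite (hw i) mxE epm -scaleNr mulrNz.
have hYm := sl2_ad hY0 hHY hm (ad_nilp i hw).
have hd : forall k, (k <= m)%N -> nm (iter k (lie (E i)) Y).
  elim=> [|k IHk] hk //=; apply: (nmE (IHk (ltnW hk)) (weight_iterE i hw k)).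
  apply/eqP => /rowP /(_ j); rewrite !mxE (negbTE nji) !andbF /= mulr0 !subr0.
  by move/eqP: hbj.
have hwm := weight_iterE i hw m.
have [W' [hW' hW'0]] := nm_witness (hd m (leqnn m)) hYm hwm.
have [hb'0 _] := lword_pos hW'.
have esr : b - m%:Z *: delta_mx 0 i = srefl A i b by rewrite /srefl epm.
rewrite -(sreflK i b); apply: root_refl; rewrite -esr.
apply: (IH _ _ _ (hd m (leqnn m)) hYm hwm).
rewrite sum_row_sub sum_row_scale sum_delta mulr1.
rewrite lerBlDr; apply: (le_trans hN); by rewrite -PoszD lez_nat -addn1 leq_add2l.
Qed.


Variable lam : 'rV[int]_n.
Variable v : 'cV[F]_d.
Hypothesis hvE : forall i, E i *m v = 0.
Hypothesis hvH : forall i, H i *m v = (lam 0 i)%:~R *: v.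

Lemma mul_lie (X Y : 'M[F]_d) (u : 'cV[F]_d) : X *m (Y *m u) = lie X Y *m u + Y *m (X *m u).
Proof. by rewrite /lie mulmxBl !mulmxA subrK. Qed.

Lemma mulmx_islin (M : 'M[F]_d) : islin (mulmx M : 'cV[F]_d -> 'cV[F]_d).
Proof. by move=> a x y; rewrite mulmxDr scalemxAr. Qed.

Lemma col_nilp j (u : 'cV[F]_d) (c : int) : H j *m u = c%:~R *: u ->
  exists p, iter p (mulmx (Fm j)) u = 0.
Proof.
move=> hu.
have hk : forall k, H j *m iter k (mulmx (Fm j)) u = (c + (-2) * k%:Z)%:~R *: iter k (mulmx (Fm j)) u.
  elim=> [|k IH] /=; first by rewrite mulr0 addr0.
  rewrite mul_lie rHF IH mulNmx -scalemxAl -scalemxAr -scaleNr -scalerDl.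
  congr (_ *: _); rewrite Aii -intrN -intrD; congr (_%:~R).
  by rewrite -[k.+1]addn1 PoszD; ring.
have := @eigen_count F hc d (H j)^T (fun k => (iter k (mulmx (Fm j)) u)^T) c (-2).
case=> // [k|k ek]; last by exists k; apply: trmx_inj; rewrite ek trmx0.
by rewrite -trmx_mul hk linearZ.
Qed.

Lemma Fv0 j : lam 0 j = 0 -> Fm j *m v = 0.
Proof.
move=> hl.
have hHv : H j *m v = 0 by rewrite hvH hl scale0r.
have hx : - (H j *m (Fm j *m v)) = 2%:R *: (Fm j *m v).
  by rewrite mul_lie rHF hHv mulmx0 addr0 mulNmx opprK -scalemxAl Aii.
have hF : H j *m (Fm j *m v) = (-2)%:~R *: (Fm j *m v).
  by rewrite -[LHS]opprK hx -scaleNr.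
have [p hp] := col_nilp hF.
apply: (@sl2_main F hc _ (mulmx (Fm j)) (mulmx (E j)) (fun x => - (H j *m x))
   (mulmx_islin _) (mulmx_islin _) _ _ _ p _ 2) => //.
- by move=> x; rewrite mul_lie (lieC (Fm j)) rEF eqxx addrK mulNmx.
- by move=> x; rewrite mulmxN opprK mul_lie opprD addrNK rHF mulNmx opprK -scalemxAl Aii.
- by move=> x; rewrite mulmxN opprK mul_lie opprD addrNK rHE -scalemxAl Aii.
- by rewrite /= [E j *m (Fm j *m v)]mul_lie rEF eqxx hvE mulmx0 addr0 hHv mulmx0.
Qed.


Definition meets (g : 'rV[int]_n) := exists k, (g 0 k != 0) && (lam 0 k != 0).

Inductive gen : 'cV[F]_d -> 'rV[int]_n -> Prop :=
| gen_v : gen v 0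
| gen_X X g u b : lword X g -> meets g -> gen u b -> gen (X *m u) (b + g).

Inductive goodw : 'cV[F]_d -> Prop :=
| gw0 : goodw 0
| gwG u b (a : F) x : gen u b -> goodw x -> goodw (a *: u + x).

Lemma gen_wt u b : gen u b -> forall k, H k *m u = (lam 0 k - pair_coroot A b k)%:~R *: u.
Proof.
elim=> [|X g u' b' hX _ _ IH] k; first by rewrite hvH pair0 subr0.
rewrite mul_lie (lword_wt hX) IH -scalemxAl -scalemxAr -scalerDl mxE pairD.
by rewrite -intrD; congr (_%:~R *: _); ring.
Qed.

Lemma gen_roots u b : gen u b -> u != 0 -> exists s : seq 'rV[int]_n,
  (forall x, x \in s -> Phi_plus_of A lam x) /\ b = \sum_(x <- s) x.
Proof.
elim=> [|X g u' b' hX hm _ IH] hu; first by exists [::]; rewrite big_nil.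
have hu' : u' != 0 by apply: contraNneq hu => ->; rewrite mulmx0.
have hX0 : X != 0 by apply: contraNneq hu => ->; rewrite mul0mx.
have [s [hs ->]] := IH hu'.
have [hg0 _] := lword_pos hX.
have hr : is_root A g.
  apply: (@root_of_nm (absz (\sum_j g 0 j)) g _ X (nm_word hX) hX0 (lword_wt hX)).
  by rewrite abszE ler_norm.
exists (g :: s); rewrite big_cons addrC; split => // x; rewrite in_cons => /orP [/eqP ->|/hs //].
by split => //; case: hm => k hk; exists k.
Qed.

Lemma goodw_lin a x y : goodw x -> goodw y -> goodw (a *: x + y).
Proof.
move=> hx hy; elim: hx => [|u b a' x' hu _ IH]; first by rewrite scaler0 add0r.
by rewrite scalerDr scalerA -addrA; apply: gwG hu IH.
Qed.

Lemma goodw_gen u b : gen u b -> goodw u.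
Proof. by move=> hu; rewrite -[u]addr0 -[u]scale1r; apply: gwG hu gw0. Qed.

Lemma goodw_map (g : 'cV[F]_d -> 'cV[F]_d) : islin g ->
  (forall u b, gen u b -> goodw (g u)) -> forall x, goodw x -> goodw (g x).
Proof.
move=> lg hg x; elim=> [|u b a x' hu _ IH]; first by rewrite (islin0 lg); exact: gw0.
by rewrite lg; apply: goodw_lin => //; apply: hg hu.
Qed.

Lemma goodw_X X g x : lword X g -> meets g -> goodw x -> goodw (X *m x).
Proof.
move=> hX hm; apply: goodw_map; first exact: mulmx_islin.
by move=> u b hu; apply: goodw_gen; apply: gen_X hX hm hu.
Qed.

Lemma goodw_F1 j u b : gen u b -> goodw (Fm j *m u).
Proof.
case: (eqVneq (lam 0 j) 0) => hl; last first.
  move=> hu; apply: goodw_gen; apply: gen_X (lw_base j) _ hu.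
  by exists j; rewrite hl mxE !eqxx.
elim=> [|X g u' b' hX hm hu' IH]; first by rewrite Fv0 //; exact: gw0.
rewrite mul_lie -[lie _ _ *m _]scale1r; apply: goodw_lin; last exact: goodw_X hX hm IH.
apply: goodw_gen; apply: gen_X (lw_br j hX) _ hu'.
case: hm => k /andP [hgk hlk]; exists k; rewrite hlk andbT !mxE.
have -> : (k == j) = false by apply/eqP => ekj; rewrite ekj hl eqxx in hlk.
by rewrite andbF addr0.
Qed.

Lemma goodw_F j x : goodw x -> goodw (Fm j *m x).
Proof. apply: goodw_map; [exact: mulmx_islin| exact: goodw_F1]. Qed.

Lemma goodw_word W c x : lword W c -> goodw x -> goodw (W *m x).
Proof.
move=> hW; elim: hW x => [j|j X b hX IH] x hx; first exact: goodw_F.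
rewrite /lie mulmxBl -!mulmxA -[Fm j *m (X *m x)]scale1r; apply: goodw_lin; first exact/goodw_F/IH.
by rewrite -scaleN1r -[_ *: _]addr0; apply: goodw_lin; [apply/IH/goodw_F| exact: gw0].
Qed.

Lemma goodw_nm Z x : nm Z -> goodw x -> goodw (Z *m x).
Proof.
move=> hZ hx; elim: hZ => [|W c a Y hW _ IH]; first by rewrite mul0mx; exact: gw0.
by rewrite mulmxDl -scalemxAl; apply: goodw_lin => //; apply: goodw_word hW hx.
Qed.

Lemma goodw_H k x : goodw x -> goodw (H k *m x).
Proof.
apply: goodw_map; first exact: mulmx_islin.
by move=> u b hu; rewrite (gen_wt hu) -[_ *: u]addr0; apply: gwG hu gw0.
Qed.

Lemma goodw_E1 i u b : gen u b -> goodw (E i *m u).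
Proof.
elim=> [|X g u' b' hX hm hu' IH]; first by rewrite hvE; exact: gw0.
rewrite mul_lie; have [Z [a [hZ ->]]] := nm_lieE i (nm_word hX).
rewrite mulmxDl -[Z *m u']scale1r -addrA; apply: goodw_lin.
  exact: goodw_nm hZ (goodw_gen hu').
rewrite -scalemxAl; apply: goodw_lin; first exact/goodw_H/goodw_gen/hu'.
exact: goodw_word hX IH.
Qed.

Lemma goodw_E i x : goodw x -> goodw (E i *m x).
Proof. apply: goodw_map; [exact: mulmx_islin| exact: goodw_E1]. Qed.



Definition goodspace m (U : 'M[F]_(m, d)) := forall y : 'rV[F]_d, (y <= U)%MS -> goodw y^T.

Lemma goodw_add x y : goodw x -> goodw y -> goodw (x + y).
Proof. by move=> hx hy; rewrite -[x]scale1r; apply: goodw_lin. Qed.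

Lemma goodw_sum (I : Type) (r : seq I) (G : I -> 'cV[F]_d) :
  (forall i, goodw (G i)) -> goodw (\sum_(i <- r) G i).
Proof.
move=> hG; elim: r => [|i r IH]; first by rewrite big_nil; exact: gw0.
by rewrite big_cons; apply: goodw_add.
Qed.

Lemma gs_sub m (U : 'M[F]_(m, d)) p (D : 'M[F]_(p, m)) : goodspace U -> forall y : 'rV[F]_d,
  (y <= D *m U)%MS -> goodw y^T.
Proof. by move=> hU y hy; apply: hU; apply: submx_trans hy (submxMl _ _). Qed.

Lemma gs_add m1 m2 (U : 'M[F]_(m1, d)) (V : 'M[F]_(m2, d)) :
  goodspace U -> goodspace V -> goodspace (U + V)%MS.
Proof.
move=> hU hV y /sub_addsmxP [[u1 u2] /= ->]; rewrite linearD /=.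
by apply: goodw_add; [apply: hU; exact: submxMl| apply: hV; exact: submxMl].
Qed.

Lemma gs_sum (S : 'I_n -> 'M[F]_d) : (forall i, goodspace (S i)) -> goodspace (\sum_i S i)%MS.
Proof.
move=> hS y /sub_sumsmxP [u ->]; rewrite linear_sum /=; apply: goodw_sum => i.
by apply: (hS i); exact: submxMl.
Qed.

Lemma gs_mul m (U : 'M[F]_(m, d)) (X : 'M[F]_d) : goodspace U ->
  (forall x, goodw x -> goodw (X *m x)) -> goodspace (U *m X^T).
Proof.
move=> hU hX y /submxP [D ->]; rewrite mulmxA trmx_mul trmxK; apply: hX.
by apply: hU; exact: submxMl.
Qed.

Definition step (U : 'M[F]_d) : 'M[F]_d :=
  (U + \sum_i (U *m (E i)^T + U *m (Fm i)^T + U *m (H i)^T))%MS.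

Lemma gs_step U : goodspace U -> goodspace (step U).
Proof.
move=> hU; apply: gs_add => //; apply: gs_sum => i; apply: gs_add; first apply: gs_add.
- by apply: gs_mul => //; exact: goodw_E.
- by apply: gs_mul => //; exact: goodw_F.
- by apply: gs_mul => //; exact: goodw_H.
Qed.

Definition U0 : 'M[F]_d := <<v^T>>%MS.

Lemma gs_U0 : goodspace U0.
Proof.
move=> y; rewrite genmxE => /submxP [D ->]; rewrite trmx_mul trmxK [D^T]mx11_scalar mul_mx_scalar.
by rewrite -[_ *: v]addr0; apply: gwG gen_v gw0.
Qed.

Definition Uk k := iter k step U0.

Lemma gs_Uk k : goodspace (Uk k).
Proof. by elim: k => [|k IH] /=; [exact: gs_U0| exact: gs_step]. Qed.

Lemma Uk_inc k : (Uk k <= Uk k.+1)%MS.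
Proof. exact: addsmxSl. Qed.

Lemma U0_Uk k : (U0 <= Uk k)%MS.
Proof. by elim: k => [|k IH]; [exact: submx_refl| exact: submx_trans IH (Uk_inc k)]. Qed.

Lemma Uk_stab : exists k, (Uk k.+1 <= Uk k)%MS.
Proof.
case: (boolP [exists k : 'I_d.+1, (Uk k.+1 <= Uk k)%MS]) => [/existsP [k hk]|]; first by exists k.
rewrite negb_exists => /forallP hall; exfalso.
have : forall k, (k <= d.+1)%N -> (k <= \rank (Uk k))%N.
  elim=> [|k IH] hk //; have hk' : (k < d.+1)%N by [].
  have := hall (Ordinal hk') => /= hn.
  have : (Uk k < Uk k.+1)%MS by rewrite /ltmx Uk_inc hn.
  rewrite ltmxErank => /andP [_ hr]; exact: leq_ltn_trans (IH (ltnW hk)) hr.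
move/(_ d.+1 (leqnn _)) => h; have := rank_leq_col (Uk d.+1).
by rewrite leqNgt (leq_trans _ h).
Qed.

Lemma all_good : irreducible_rep E Fm H -> v != 0 -> forall x, goodw x.
Proof.
move=> hirr hv0 x; have [k hk] := Uk_stab.
have hsub : forall X, (Uk k *m X <= Uk k.+1)%MS -> (Uk k *m X <= Uk k)%MS.
  by move=> X h; apply: submx_trans h hk.
have hst : forall i, (Uk k *m (E i)^T <= Uk k.+1)%MS /\ (Uk k *m (Fm i)^T <= Uk k.+1)%MS /\
    (Uk k *m (H i)^T <= Uk k.+1)%MS.
  move=> i; rewrite /= /step.
  have hS : forall M : 'M[F]_d, (M <= Uk k *m (E i)^T + Uk k *m (Fm i)^T + Uk k *m (H i)^T)%MS ->
      (M <= Uk k + \sum_i (Uk k *m (E i)^T + Uk k *m (Fm i)^T + Uk k *m (H i)^T))%MS.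
    move=> M hM; apply: submx_trans (addsmxSr _ _).
    by apply: (sumsmx_sup i) => //.
  split; [|split]; apply: hS.
  - by apply: submx_trans (addsmxSl _ _); exact: addsmxSl.
  - by apply: submx_trans (addsmxSl _ _); exact: addsmxSr.
  - exact: addsmxSr.
case: (hirr (Uk k)).
- move=> i; have [h1 [h2 h3]] := hst i.
  by rewrite /stable_col !hsub.
- move=> h0; exfalso; move/eqP: hv0; apply.
  have : (v^T <= Uk k)%MS by apply: submx_trans (U0_Uk k); rewrite /U0 genmxE.
  by rewrite h0 submx0 => /eqP /(congr1 trmx); rewrite trmxK trmx0.
- move=> hfull; rewrite -[x]trmxK; exact: (@gs_Uk k (x^T) (submx_full _ hfull)).
Qed.

Lemma goodw_seq x : goodw x -> exists s : seq ('cV[F]_d * 'rV[int]_n),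
  (forall p, p \in s -> exists a u, gen u p.2 /\ p.1 = a *: u) /\ x = \sum_(p <- s) p.1.
Proof.
elim=> [|u b a x' hu _ [s [hs ->]]]; first by exists [::]; rewrite big_nil.
exists ((a *: u, b) :: s); rewrite big_cons; split => // p; rewrite in_cons => /orP [/eqP -> |/hs //].
by exists a, u.
Qed.

Lemma weight_witness (pi : 'rV[int]_n) (w : 'cV[F]_d) : w != 0 ->
  (forall i, H i *m w = (pi 0 i)%:~R *: w) -> goodw w ->
  exists u b, [/\ gen u b, u != 0 & forall k, lam 0 k - pair_coroot A b k = pi 0 k].
Proof.
move=> hw0 hw /goodw_seq [s [hs ew]].
pose wl (b : 'rV[int]_n) : 'rV[F]_n := \row_k (lam 0 k - pair_coroot A b k)%:~R.
pose mu : 'rV[F]_n := \row_k (pi 0 k)%:~R.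
case: (boolP (has (fun p => (p.1 != 0) && (wl p.2 == mu)) s)).
  move/hasP => [p hp /andP [hp0 /eqP hwl]]; have [a [u [hu e1]]] := hs p hp.
  exists u, p.2; split => //.
    by apply: contra hp0; rewrite e1 => /eqP ->; rewrite scaler0.
  move=> k; move/rowP: hwl => /(_ k); rewrite !mxE; exact: intrF_inj.
move/hasPn => hn; exfalso; move/eqP: hw0; apply.
apply: (@kill _ _ n (fun k => mulmx (H k)) (fun k => mulmx_islin (H k))
  [seq (p.1, wl p.2) | p <- s & p.1 != 0] mu) => //.
- move=> q /mapP [p]; rewrite mem_filter => /andP [_ hp] -> k /=.
  have [a [u [hu ->]]] := hs p hp.
  by rewrite -scalemxAr (gen_wt hu) scalerA mulrC -scalerA mxE.
- rewrite ew big_map big_filter_cond /= [in RHS]big_mkcond /=; apply: eq_bigr => p _.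
  by rewrite andbT; case: eqP => [->|].
- by move=> k; rewrite hw mxE.
- move=> q /mapP [p]; rewrite mem_filter => /andP [hp0 hp] -> /=.
  by have := hn p hp; rewrite hp0.
Qed.
End Main.

Theorem proposition2p1
  (F : closedFieldType) (hchar : [pchar F] =i pred0)
  (n : nat) (A : 'M[int]_n) (hA : finite_cartan A)
  (d : nat) (E Fm H : 'I_n -> 'M[F]_d) (hrep : is_rep A E Fm H)
  (lam : 'rV[int]_n) (hdom : dominant lam)
  (hhw : highest_weight E H lam) (hirr : irreducible_rep E Fm H)
  (pi : 'rV[int]_n) (hpi : is_weight H pi) :
  le_lam A lam pi lam.
Proof.
case: hhw => v [hv0 hv].
have hvE : forall i, E i *m v = 0 by move=> i; case: (hv i).
have hvH : forall i, H i *m v = (lam 0 i)%:~R *: v by move=> i; case: (hv i).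
case: hpi => w [hw0 hw].
have hgood := all_good hchar hrep hA hvE hvH hirr hv0 w.
have [u [b [hu hu0 hk]]] := weight_witness hchar hrep hvH hw0 hw hgood.
have [s [hs eb]] := gen_roots hchar hrep hA hu hu0.
exists s; split => //.
rewrite -eb; apply/rowP => k; rewrite !mxE -hk opprB addrC subrK //.
Qed.
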